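(* Let $R$ be a commutative ring with $1$ and $I$ an ideal of $R$ which is not contained in any minimal prime ideal of $R$. If $I$ is a projective $R$-module, then $I$ is a finitely generated ideal. *)

(* Defs.v *)
From HB Require Import structures.
From mathcomp Require Import all_boot all_order all_algebra.
Set Implicit Arguments. Unset Strict Implicit. Unset Printing Implicit Defensive.
Import GRing.Theory.
Local Open Scope ring_scope.

Definition is_ideal (R : comPzRingType) (I : R -> Prop) : Prop :=
  [/\ I 0, (forall x y, I x -> I y -> I (x + y))
    & (forall a x, I x -> I (a * x))].

Definition prime_ideal (R : comPzRingType) (P : R -> Prop) : Prop :=
  [/\ is_ideal P, ~ P 1 & (forall a b, P (a * b) -> P a \/ P b)].

Definition minimal_prime (R : comPzRingType) (P : R -> Prop) : Prop :=
  prime_ideal P /\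
  (forall Q : R -> Prop, prime_ideal Q -> (forall x, Q x -> P x) ->
     forall x, P x -> Q x).

Definition fg_ideal (R : comPzRingType) (I : R -> Prop) : Prop :=
  exists (n : nat) (g : 'I_n -> R), (forall i, I (g i)) /\
    (forall x, I x -> exists c : 'I_n -> R, x = \sum_(i < n) c i * g i).

(* h : I -> M is R-linear, where I is viewed as a submodule of R;
   h is given as a function on R whose values outside I are irrelevant. *)
Definition ideal_linear (R : comPzRingType) (I : R -> Prop) (M : lmodType R)
  (h : R -> M) : Prop :=
  (forall x y, I x -> I y -> h (x + y) = h x + h y) /\
  (forall a x, I x -> h (a * x) = a *: h x).

Definition projective_ideal (R : comPzRingType) (I : R -> Prop) : Prop :=
  forall (M N : lmodType R) (f : {linear M -> N}),
    (forall n : N, exists m : M, f m = n) ->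
    forall g : R -> N, ideal_linear I g ->
      exists h : R -> M, ideal_linear I h /\ (forall x, I x -> f (h x) = g x).

(* Main.v *)
Require Import Defs.
From HB Require Import structures.
From mathcomp Require Import all_boot all_order all_algebra.
From mathcomp Require Import finmap.
From mathcomp.multinomials Require Import monalg.
From mathcomp Require Import boolp classical_sets.
From mathcomp Require Import ring.
Set Implicit Arguments. Unset Strict Implicit. Unset Printing Implicit Defensive.
Import GRing.Theory.
Local Open Scope ring_scope.

Section FreeMod.
Variables (K : choiceType) (R : pzRingType).
Definition fm := malg K R.
HB.instance Definition _ := GRing.Zmodule.on fm.

Definition fmscale (c : R) (g : fm) : fm :=
  \sum_(k <- msupp g) << c * g@_k *g k >>.

Lemma fmscaleE c g k : (fmscale c g)@_k = c * g@_k.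
Proof.
rewrite /fmscale; rewrite [in RHS](monalgE g) !raddf_sum mulr_sumr.
by apply/eq_bigr=> /= i _; rewrite !mcoeffU mulrnAr.
Qed.

Lemma fmscaleA c1 c2 g : fmscale c1 (fmscale c2 g) = fmscale (c1 * c2) g.
Proof. by apply/malgP=> x; rewrite !fmscaleE mulrA. Qed.
Lemma fmscale1r g : fmscale 1 g = g.
Proof. by apply/malgP=> k; rewrite !fmscaleE mul1r. Qed.
Lemma fmscaleDr c (g1 g2 : fm) : fmscale c (g1 + g2) = fmscale c g1 + fmscale c g2.
Proof. by apply/malgP=> k; rewrite !(mcoeffD, fmscaleE) mulrDr. Qed.
Lemma fmscaleDl g c1 c2: fmscale (c1 + c2) g = fmscale c1 g + fmscale c2 g.
Proof. by apply/malgP=> x; rewrite !(mcoeffD, fmscaleE) mulrDl. Qed.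

HB.instance Definition _ := GRing.Zmodule_isLmodule.Build R fm
  fmscaleA fmscale1r fmscaleDr fmscaleDl.

Lemma fmcoeffZ c (g : fm) k : (c *: g)@_k = c * g@_k.
Proof. exact: fmscaleE. Qed.

Lemma fmsuppZ_le c (g : fm) : (msupp (c *: g) `<=` msupp g)%fset.
Proof.
apply/fsubsetP=> k; rewrite -!mcoeff_neq0 fmcoeffZ.
by apply/contraTneq=> ->; rewrite mulr0 negbK.
Qed.
End FreeMod.

Section Isub.
Variables (R : comPzRingType) (I : R -> Prop) (HI : is_ideal I).
Definition pI : pred R := fun x => `[< I x >].
Record isub_ (hi : is_ideal I) := ISub { ival : R; ivalP : pI ival }.
Notation isub := (isub_ HI).
HB.instance Definition _ := [isSub of isub for @ival HI].
HB.instance Definition _ := [Choice of isub by <:].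

Lemma pIP x : reflect (I x) (pI x).
Proof. exact: asboolP. Qed.

Let I0 : I 0. Proof. by case: HI. Qed.
Let ID x y : I x -> I y -> I (x + y). Proof. by case: HI => _ H _; apply: H. Qed.
Let IM a x : I x -> I (a * x). Proof. by case: HI => _ _ H; apply: H. Qed.

Definition izero : isub := ISub HI (introT (pIP 0) I0).
Definition iadd (u v : isub) : isub := ISub HI (introT (pIP _) (ID (elimT (pIP _) (ivalP u)) (elimT (pIP _) (ivalP v)))).
Definition iscale (a : R) (u : isub) : isub := ISub HI (introT (pIP _) (IM a (elimT (pIP _) (ivalP u)))).
Definition iopp (u : isub) := iscale (-1) u.

Lemma iaddA : associative iadd. Proof. by move=> *; apply: val_inj; rewrite /= addrA. Qed.
Lemma iaddC : commutative iadd. Proof. by move=> *; apply: val_inj; rewrite /= addrC. Qed.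
Lemma iadd0 : left_id izero iadd. Proof. by move=> *; apply: val_inj; rewrite /= add0r. Qed.
Lemma iaddN : left_inverse izero iopp iadd.
Proof. by move=> *; apply: val_inj; rewrite /= mulN1r addNr. Qed.
HB.instance Definition _ := GRing.isZmodule.Build isub iaddA iaddC iadd0 iaddN.

Lemma iscaleA c1 c2 u : iscale c1 (iscale c2 u) = iscale (c1 * c2) u.
Proof. by apply: val_inj; rewrite /= mulrA. Qed.
Lemma iscale1 u : iscale 1 u = u. Proof. by apply: val_inj; rewrite /= mul1r. Qed.
Lemma iscaleDr c (u v : isub) : iscale c (u + v) = iscale c u + iscale c v.
Proof. by apply: val_inj; rewrite /= mulrDr. Qed.
Lemma iscaleDl u c1 c2 : iscale (c1 + c2) u = iscale c1 u + iscale c2 u.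
Proof. by apply: val_inj; rewrite /= mulrDl. Qed.
HB.instance Definition _ := GRing.Zmodule_isLmodule.Build R isub
  iscaleA iscale1 iscaleDr iscaleDl.

Lemma ivalD (u v : isub) : ival (u + v) = ival u + ival v. Proof. by []. Qed.
Lemma ivalZ c (u : isub) : ival (c *: u) = c * ival u. Proof. by []. Qed.
Lemma ival0 : ival (0 : isub) = 0. Proof. by []. Qed.
Lemma ival_sum (s : seq isub) (F : isub -> isub) :
  ival (\sum_(k <- s) F k) = \sum_(k <- s) ival (F k).
Proof.
elim: s => [|a s IH]; first by rewrite !big_nil.
by rewrite !big_cons ivalD IH.
Qed.

Definition M := fm (isub_ HI) R.
Definition fmap_ (m : M) : isub := \sum_(k <- msupp m) m@_k *: k.

Lemma fmapEw (m : M) (d : {fset isub}) : (msupp m `<=` d)%fset ->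
  fmap_ m = \sum_(k <- d) m@_k *: k.
Proof.
move=> sd; rewrite /fmap_; apply: big_fset_incl => // k _ kn.
by rewrite mcoeff_outdom // scale0r.
Qed.

Lemma fmap_lin : linear fmap_.
Proof.
move=> a u v.
set d := (msupp u `|` msupp v)%fset.
have s1 : (msupp (a *: u + v) `<=` d)%fset.
  apply/fsubsetP => k /(fsubsetP (msuppD_le _ _)).
  rewrite !inE => /orP[/(fsubsetP (fmsuppZ_le _ _)) -> //|->].
  by rewrite orbT.
have s2 : (msupp u `<=` d)%fset by apply: fsubsetUl.
have s3 : (msupp v `<=` d)%fset by apply: fsubsetUr.
rewrite (fmapEw s1) (fmapEw s2) (fmapEw s3).
rewrite scaler_sumr -big_split /=; apply: eq_bigr => k _.
by rewrite mcoeffD fmcoeffZ scalerDl scalerA.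
Qed.

HB.instance Definition _ := GRing.isLinear.Build R M isub *:%R fmap_ fmap_lin.

Lemma fmap_surj (n : isub) : exists m : M, fmap_ m = n.
Proof.
exists (<< 1 *g n >> : M).
rewrite (@fmapEw _ [fset n]%fset) ?msuppU_le // big_seq_fset1.
by rewrite mcoeffUU scale1r.
Qed.

End Isub.

Section Main.
Variables (R : comPzRingType) (I : R -> Prop) (HI : is_ideal I).
Variable (h : R -> @M R I HI).
Hypothesis hlin : ideal_linear I h.
Hypothesis hf : forall x, I x -> fmap_ (h x) = insubd (0 : @isub_ R I HI) x.

Let I0 : I 0. Proof. by case: HI. Qed.
Let ID x y : I x -> I y -> I (x + y). Proof. by case: HI => _ H _; apply: H. Qed.
Let IM a x : I x -> I (a * x). Proof. by case: HI => _ _ H; apply: H. Qed.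

Definition phi (k : @isub_ R I HI) (x : R) : R := (h x)@_k.

Lemma phiM k a x : I x -> phi k (a * x) = a * phi k x.
Proof. by move=> Ix; rewrite /phi (proj2 hlin a x Ix) fmcoeffZ. Qed.

Lemma phi_swap k x y : I x -> I y -> phi k x * y = phi k y * x.
Proof.
move=> Ix Iy; by rewrite mulrC -phiM // [y * x]mulrC phiM // mulrC.
Qed.

Lemma expand a : I a -> a = \sum_(k <- msupp (h a)) phi k a * ival k.
Proof.
move=> Ia; have := congr1 (@ival _ _ HI) (hf Ia).
have -> : ival (insubd (0 : @isub_ R I HI) a) = a.
  by rewrite (val_insubd (0 : @isub_ R I HI) a) (introT (pIP I a) Ia).
rewrite /fmap_ ival_sum => E.
transitivity (\sum_(k <- msupp (h a)) ival ((h a)@_k *: k)); first by rewrite E.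
by apply: eq_bigr => k _; rewrite ivalZ.
Qed.

Definition T (t : R) := exists s : seq (R * @isub_ R I HI * R),
  (forall p, p \in s -> I p.2) /\ t = \sum_(p <- s) p.1.1 * phi p.1.2 p.2.

Lemma T0 : T 0.
Proof. by exists [::]; split => //; rewrite big_nil. Qed.

Lemma TD t t' : T t -> T t' -> T (t + t').
Proof.
move=> [s [Hs ->]] [s' [Hs' ->]]; exists (s ++ s'); split; last by rewrite big_cat.
by move=> p; rewrite mem_cat => /orP[/Hs|/Hs'].
Qed.

Lemma TM r t : T t -> T (r * t).
Proof.
move=> [s [Hs ->]]; exists [seq (r * p.1.1, p.1.2, p.2) | p <- s]; split.
  by move=> p /mapP [q qs ->] /=; apply: Hs.
by rewrite big_map mulr_sumr; apply: eq_bigr => p _ /=; rewrite mulrA.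
Qed.

Lemma fg_of_T1 : T 1 -> fg_ideal I.
Proof.
move=> [s [Hs H1]].
pose p0 : R * @isub_ R I HI * R := (0, 0, 0).
exists (size s), (fun i => (nth p0 s i).2); split.
  by move=> i; apply: Hs; apply: mem_nth.
move=> x Ix.
exists (fun i => (nth p0 s i).1.1 * phi (nth p0 s i).1.2 x).
rewrite -[LHS]mul1r H1 mulr_suml.
rewrite (big_nth p0) big_mkord; apply: eq_bigr => i _.
rewrite -!mulrA; congr (_ * _); apply: phi_swap => //.
by apply: Hs; apply: mem_nth.
Qed.

Lemma key a : I a -> exists t, T t /\ (1 - t) * (a * a) = 0.
Proof.
move=> Ia; exists (\sum_(k <- msupp (h a)) phi k (ival k)); split.
  exists [seq (1, k, ival k) | k <- msupp (h a)]; split.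
    by move=> p /mapP [k _ ->] /=; apply/pIP; apply: (ivalP k).
  by rewrite big_map; apply: eq_bigr => k _ /=; rewrite mul1r.
have E : (\sum_(k <- msupp (h a)) phi k (ival k)) * (a * a) = a * a.
  rewrite {4}(expand Ia) !mulr_suml; apply: eq_bigr => k _.
  by rewrite (phi_swap k Ia (elimT (pIP I _) (ivalP k))) mulrA.
by rewrite mulrBl mul1r E subrr.
Qed.

End Main.

Section MinPrime.
Variables (R : comPzRingType) (T : R -> Prop).
Hypotheses (T0 : T 0) (TD : forall t t', T t -> T t' -> T (t + t'))
  (TM : forall r t, T t -> T (r * t)) (nT1 : ~ T 1).

Let S (s : R) := exists t, T t /\ s = 1 - t.

Let S1 : S 1. Proof. by exists 0; split => //; rewrite subr0. Qed.
Let SM a b : S a -> S b -> S (a * b).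
Proof.
move=> [t [Tt ->]] [t' [Tt' ->]]; exists (t + (t' + (- t') * t)); split.
  by apply: TD => //; apply: TD => //; apply: TM.
by ring.
Qed.
Let S0 : ~ S 0.
Proof.
move=> [t [Tt /eqP]]; rewrite eq_sym subr_eq0 => /eqP E.
by apply: nT1; rewrite E.
Qed.

Let Pfam (U : set R) := [/\ (forall a b, U a -> U b -> U (a * b)), ~ U 0
  & (forall x, U x -> forall s, S s -> U s)].

Let PfamS : Pfam S. Proof. by split => // x _. Qed.

Lemma exists_min_prime : exists P, minimal_prime P /\ (forall t, T t -> ~ P (1 - t)).
Proof.
have [A [PA Amax]] : exists A, Pfam A /\ forall B, (A `<` B)%classic -> ~ Pfam B.
  apply: Zorn_bigcup => F FP Ftot; split.
  - move=> a b [X FX Xa] [Y FY Yb].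
    have [XY|YX] := Ftot X Y FX FY.
    + exists Y => //; case: (FP Y FY) => H _ _; apply: H => //; exact: XY.
    + exists X => //; case: (FP X FX) => H _ _; apply: H => //; exact: YX.
  - by move=> [X FX X0]; case: (FP X FX) => _ H _; apply: H.
  - move=> x [X FX Xx] s Ss; exists X => //.
    by case: (FP X FX) => _ _ H; apply: (H x).
have maxl B : Pfam B -> (forall x, A x -> B x) -> forall x, B x -> A x.
  move=> PB AB; have [//|nBA] := pselect (B `<=` A)%classic.
  by exfalso; apply: (Amax B) => //; split.
case: PA => Amul nA0 AS.
have SA s : S s -> A s.
  move=> Ss; have [[x Ax]|nA] := pselect (exists x, A x); first exact: (AS x).
  apply: (maxl S PfamS) => // x Ax; exfalso; apply: nA; by exists x.
have A1 : A 1 by apply: SA.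
have Aexp x n : A x -> A (x ^+ n).
  by move=> Ax; elim: n => [|n IH]; rewrite ?expr0 // exprS; apply: Amul.
have charP x : ~ A x -> exists u n, A u /\ u * x ^+ n = 0.
  move=> nAx.
  pose B y := exists u n, A u /\ y = u * x ^+ n.
  have [[u [n [Au E]]]|nB0] := pselect (B 0); first by exists u, n.
  exfalso; apply: nAx; apply: (maxl B).
  - split => //.
    + move=> _ _ [u [n [Au ->]]] [v [m [Av ->]]]; exists (u * v), (n + m).
      by split; [apply: Amul | rewrite exprD mulrACA].
    + move=> y _ s Ss; exists s, 0%N; split; [exact: SA| by rewrite expr0 mulr1].
  - by move=> y Ay; exists y, 0%N; split => //; rewrite expr0 mulr1.
  - by exists 1, 1%N; split => //; rewrite expr1 mul1r.
have charP2 x u n : A u -> u * x ^+ n = 0 -> ~ A x.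
  by move=> Au E Ax; apply: nA0; rewrite -E; apply: Amul => //; apply: Aexp.
have binom (x y u v : R) n m : u * x ^+ n = 0 -> v * y ^+ m = 0 ->
    (u * v) * (x + y) ^+ (n + m) = 0.
  move=> Hu Hv; rewrite exprDn mulr_sumr big1 // => i _.
  rewrite mulrnAr.
  suff -> : u * v * (x ^+ (n + m - i) * y ^+ i) = 0 by rewrite mul0rn.
  have [mi|im] := leqP m i.
    rewrite -(subnKC mi) exprD.
    have -> : u * v * (x ^+ (n + m - (m + (i - m))) * (y ^+ m * y ^+ (i - m)))
      = (v * y ^+ m) * (u * x ^+ (n + m - (m + (i - m))) * y ^+ (i - m)) by ring.
    by rewrite Hv mul0r.
  have -> : (n + m - i = n + (m - i))%N by rewrite addnBA // ltnW.
  rewrite exprD.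
  have -> : u * v * (x ^+ n * x ^+ (m - i) * y ^+ i)
      = (u * x ^+ n) * (v * x ^+ (m - i) * y ^+ i) by ring.
  by rewrite Hu mul0r.
exists (fun x => ~ A x); split; last first.
  by move=> t Tt; apply; apply: SA; exists t.
have primeP : prime_ideal (fun x => ~ A x).
  split.
  - split => //.
    + move=> x y /charP [u [n [Au Hu]]] /charP [v [m [Av Hv]]].
      exact: (charP2 _ _ _ (Amul _ _ Au Av) (binom _ _ _ _ _ _ Hu Hv)).
    + move=> a x /charP [u [n [Au Hu]]]; apply: (charP2 _ u n Au).
      by rewrite exprMn mulrCA Hu mulr0.
  - by apply.
  - move=> a b nAab; have [Aa|] := pselect (A a); last by left.
    have [Ab|] := pselect (A b); last by right.
    by exfalso; apply: nAab; apply: Amul.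
split => // Q [[Q0 QD QM] nQ1 Qpr] QP x nAx.
have [//|nQx] := pselect (Q x); exfalso; apply: nAx.
apply: (maxl (fun y => ~ Q y)) => //.
- split => //.
  + by move=> a b nQa nQb /Qpr [].
  + by move=> _ _ s Ss Qs; apply: (QP s Qs); apply: SA.
- by move=> y Ay Qy; apply: (QP y Qy).
Qed.
End MinPrime.

Theorem corollary3p8 (R : comPzRingType) (I : R -> Prop) :
  is_ideal I ->
  (forall P : R -> Prop, minimal_prime P -> ~ (forall x, I x -> P x)) ->
  projective_ideal I ->
  fg_ideal I.
Proof.
move=> HI Hmin Hproj.
have glin : ideal_linear I (insubd (0 : @isub_ R I HI)).
  have vE x : I x -> ival (insubd (0 : @isub_ R I HI) x) = x.
    by move=> Ix; rewrite (val_insubd (0 : @isub_ R I HI) x) (introT (pIP I x) Ix).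
  have IDx x y : I x -> I y -> I (x + y) by case: (HI) => _ H _; apply: H.
  have IMx a x : I x -> I (a * x) by case: (HI) => _ _ H; apply: H.
  split.
  - move=> x y Ix Iy; apply: val_inj.
    by rewrite /= [LHS]vE ?ivalD ?vE //; apply: IDx.
  - move=> a x Ix; apply: val_inj.
    by rewrite /= [LHS]vE ?ivalZ ?vE //; apply: IMx.
have [h [hlin hf]] := Hproj _ _ (@fmap_ R I HI) (@fmap_surj R I HI) _ glin.
have [T1|nT1] := pselect (T h 1); first exact: (fg_of_T1 hlin T1).
have [P [Pmin HP]] :=
  exists_min_prime (T0 h) (@TD _ _ _ h) (@TM _ _ _ h) nT1.
have [[[P0 PD PM] nP1 Ppr] _] := Pmin.
exfalso; apply: (Hmin P Pmin) => a Ia.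
have [t [Tt E]] := key hlin hf Ia.
have : P ((1 - t) * (a * a)) by rewrite E.
by move=> /Ppr [/(HP t Tt)|/Ppr []].
Qed.

Print Assumptions corollary3p8.
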